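(* Let $W$ be the set of states $s$ from which the team has a collective strategy ensuring that $T$ is reached with probability $1$ against every opponent strategy (plays starting at $s$). Define $W_0=T$ and, for $k\ge0$, $W_{k+1}=W_k\cup\{s\in W\mid$ there is a collective selector $\bar\xi_\Pi$ at $s$ such that for every opponent action $b\in\mathsf{Av}_{\mathsf O}(s)$, $\sum_{t\in W_k}\sum_{\bar a_\Pi}\big(\prod_{p\in\Pi}\xi_p(a_p)\big)\delta(s,(\bar a_\Pi,b))(t)>0$ and $\sum_{t\in W}\sum_{\bar a_\Pi}\big(\prod_{p\in\Pi}\xi_p(a_p)\big)\delta(s,(\bar a_\Pi,b))(t)=1\}$. Then there exists $m$ with $W_m=W$.
   Context: A game structure is $G=(\Sigma,S,(A_p)_{p\in\Sigma},(\mathsf{Av}_p)_{p\in\Sigma},\delta)$ with players $\Sigma$, finite state set $S$, finite action sets $A_p$, nonempty available-action sets $\mathsf{Av}_p(s)\subseteq A_p$, and transition function $\delta$ mapping a state and an available action profile to a probability distribution on $S$. The team is $\Pi\subseteq\Sigma$, $\Sigma\setminus\Pi=\{\mathsf O\}$ (opponent), and the target set $T\subseteq S$ is absorbing. Strategies map histories ending in $s$ to distributions over $\mathsf{Av}_p(s)$; a collective strategy is a tuple of strategies for the team players, who randomise independently (joint action probabilities are products of individual ones). A collective selector at $s$ is a tuple $(\xi_p)_{p\in\Pi}$ of distributions $\xi_p$ over $\mathsf{Av}_p(s)$; $\bar a_\Pi$ ranges over $\prod_{p\in\Pi}\mathsf{Av}_p(s)$. *)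

(* Defs.v *)
From HB Require Import structures.
From mathcomp Require Import all_boot all_order all_algebra.
From mathcomp Require Import boolp reals.
Set Implicit Arguments. Unset Strict Implicit. Unset Printing Implicit Defensive.
Import Order.TTheory GRing.Theory Num.Theory.
Local Open Scope ring_scope.

Section Game.
Variable R : realType.
Variables (S P : finType) (A : P -> finType) (AO : finType).

Definition profile := {dffun forall p : P, A p}.

Variable Av : forall p : P, S -> {set A p}.
Variable AvO : S -> {set AO}.
Variable delta : S -> profile -> AO -> S -> R.
Variable T : {set S}.

Definition avail_prof (s : S) (a : profile) : bool := [forall p, a p \in Av p s].

Definition is_dist (D : finType) (X : {set D}) (f : D -> R) : Prop :=
  [/\ forall x, 0 <= f x, forall x, x \notin X -> f x = 0 & \sum_x f x = 1].

(* strategies: the history (a nonempty sequence of states, ending in the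
   current state) is mapped to a distribution over available actions *)
Definition team_strategy := forall p : P, seq S -> A p -> R.
Definition opp_strategy := seq S -> AO -> R.

Definition valid_team (sigma : team_strategy) : Prop :=
  forall p (h : seq S) (s : S), is_dist (Av p s) (sigma p (rcons h s)).
Definition valid_opp (tau : opp_strategy) : Prop :=
  forall (h : seq S) (s : S), is_dist (AvO s) (tau (rcons h s)).

(* probability that the play, continuing from history h followed by current
   state s, visits T within n further steps, when the team plays sigma
   (players randomising independently) and the opponent plays tau *)
Fixpoint reach_within (sigma : team_strategy) (tau : opp_strategy)
    (n : nat) (h : seq S) (s : S) : R :=
  if s \in T then 1 else
  match n with
  | 0 => 0
  | n'.+1 =>
      \sum_(a : profile | avail_prof s a) \sum_(b in AvO s)
        ((\prod_(p : P) sigma p (rcons h s) (a p)) * tau (rcons h s) b *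
         \sum_(t : S) delta s a b t * reach_within sigma tau n' (rcons h s) t)
  end.

(* the probability of reaching T from s is the supremum (= limit) over n of
   the probabilities of reaching T within n steps; it equals 1 iff for every
   eps > 0 some horizon n gives at least 1 - eps *)
Definition reach_prob_one (sigma : team_strategy) (tau : opp_strategy) (s : S) : Prop :=
  forall eps : R, 0 < eps -> exists n : nat, 1 - eps <= reach_within sigma tau n [::] s.

Definition Win (s : S) : Prop :=
  exists sigma : team_strategy, valid_team sigma /\
    forall tau : opp_strategy, valid_opp tau -> reach_prob_one sigma tau s.

Definition coll_selector (s : S) (xi : forall p : P, A p -> R) : Prop :=
  forall p, is_dist (Av p s) (xi p).

Definition mass (X : S -> Prop) (xi : forall p : P, A p -> R) (s : S) (b : AO) : R :=
  \sum_(t : S | `[< X t >]) \sum_(a : profile | avail_prof s a)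
     (\prod_(p : P) xi p (a p)) * delta s a b t.

Fixpoint Wk (k : nat) : S -> Prop :=
  match k with
  | 0 => fun s => s \in T
  | k'.+1 => fun s => Wk k' s \/
      (Win s /\ exists xi : forall p : P, A p -> R, coll_selector s xi /\
          forall b : AO, b \in AvO s -> 0 < mass (Wk k') xi s b /\ mass Win xi s b = 1)
  end.

End Game.

(* Main.v *)
Require Import Defs.
From HB Require Import structures.
From mathcomp Require Import all_boot all_order all_algebra.
From mathcomp Require Import boolp reals.
From mathcomp Require Import lra.
Import Order.TTheory GRing.Theory Num.Theory.
Local Open Scope ring_scope.

Lemma sum_prod (R : realType) (P : finType) (A : P -> finType) (F : forall p, A p -> R) :
  \sum_(a : profile A) \prod_p F p (a p) = \prod_p \sum_(x : A p) F p x.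
Proof.
rewrite (reindex (@dffun_of_fprod P A)) /=; last exact/onW_bij/dffun_of_fprod_bij.
transitivity (\sum_(t : fprod A) \prod_(p in P) [ffun x => F p x] (t p)).
  by apply: eq_bigr => t _; apply: eq_bigr => p _; rewrite !ffunE.
rewrite (@big_fprod R 0 1 *%R +%R P A (fun p => [ffun x => F p x])).
rewrite -(bigA_distr_big_dep (fun i => tagged_with A i) (fun i j => untag 0 ([ffun x => F i x]) j)).
apply: eq_bigr => p _.
have := (big_tag (fun p => [ffun x => F p x]) p).
move=> <-.
by apply: eq_bigr => x _; rewrite ffunE.
Qed.

Lemma sum_in_dist (R : realType) (D : finType) (X : {set D}) (f : D -> R) :
  is_dist X f -> \sum_(x in X) f x = 1.
Proof.
case=> _ h0 h1; rewrite -h1 big_mkcond /=; apply: eq_bigr => x _.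
by case: ifP => // /negbT /h0 ->.
Qed.

Lemma dist_le1 (R : realType) (D : finType) (X : {set D}) (f : D -> R) x :
  is_dist X f -> f x <= 1.
Proof.
case=> h0 _ h1; rewrite -h1 (bigD1 x) //= lerDl sumr_ge0 //.
Qed.

Lemma sum_ge_term (R : realType) (I : finType) (Pr : pred I) (F : I -> R) i :
  (forall j, Pr j -> 0 <= F j) -> Pr i -> F i <= \sum_(j | Pr j) F j.
Proof.
move=> h hi; rewrite (bigD1 i) //= lerDl sumr_ge0 // => j /andP [hj _]; exact: h.
Qed.

Section Proofs.
Variable R : realType.
Variables (S P : finType) (A : P -> finType) (AO : finType).
Variable Av : forall p : P, S -> {set A p}.
Variable AvO : S -> {set AO}.
Variable delta : S -> profile A -> AO -> S -> R.
Variable T : {set S}.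
Hypothesis hAv : forall p s, Av p s != set0.
Hypothesis hAvO : forall s, AvO s != set0.
Hypothesis hdelta : forall s a b, avail_prof Av s a -> b \in AvO s ->
                is_dist [set: S] (delta s a b).

Local Notation rw := (reach_within Av AvO delta T).
Local Notation W := (Win Av AvO delta T).
Local Notation WK := (Wk Av AvO delta T).

Definition Winh (sg : team_strategy R S A) h s := forall tau, valid_opp AvO tau ->
  forall eps : R, 0 < eps -> exists n, 1 - eps <= rw sg tau n h s.

Lemma sel_sum s (xi : forall p, A p -> R) : coll_selector Av s xi ->
  \sum_(a | avail_prof Av s a) \prod_p xi p (a p) = 1.
Proof.
move=> hxi; rewrite big_mkcond /=.
rewrite -[RHS](_ : \prod_p \sum_x xi p x = 1); last first.
  by rewrite big1 // => p _; case: (hxi p).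
rewrite -sum_prod; apply: eq_bigr => a _; case: ifP => // /negbT.
rewrite negb_forall => /existsP [p hp].
apply/esym/eqP/prodf_eq0; exists p => //; case: (hxi p) => _ -> //.
Qed.

Lemma prod_ge0 s (xi : forall p, A p -> R) a : coll_selector Av s xi ->
  0 <= \prod_p xi p (a p).
Proof. by move=> h; apply: prodr_ge0 => p _; case: (h p). Qed.

Lemma delta_ge0 s a b t : avail_prof Av s a -> b \in AvO s -> 0 <= delta s a b t.
Proof. by move=> ha hb; case: (hdelta _ _ _ ha hb) => h _ _; exact: h. Qed.

Lemma delta_sum s a b : avail_prof Av s a -> b \in AvO s -> \sum_t delta s a b t = 1.
Proof. by move=> ha hb; case: (hdelta _ _ _ ha hb). Qed.

Lemma rw_bounds sg tau : valid_team Av sg -> valid_opp AvO tau ->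
  forall n h s, 0 <= rw sg tau n h s <= 1.
Proof.
move=> hs ht; elim=> [|n IH] h s /=; first by case: ifP => _; rewrite ?lexx ?ler01.
case: ifP => _; first by rewrite ler01 lexx.
have hsel : coll_selector Av s (fun p => sg p (rcons h s)) by move=> p; exact: hs.
apply/andP; split.
  apply: sumr_ge0 => a ha; apply: sumr_ge0 => b hb.
  apply: mulr_ge0; first apply: mulr_ge0; first exact: (prod_ge0 _ _ a hsel).
    by case: (ht h s).
  apply: sumr_ge0 => t _; apply: mulr_ge0; first exact: delta_ge0 _ _ _ _ ha hb.
  by case/andP: (IH (rcons h s) t).
rewrite -[X in _ <= X](sel_sum _ _ hsel); apply: ler_sum => a ha.
apply: (@le_trans _ _ (\sum_(b in AvO s) \prod_p sg p (rcons h s) (a p) * tau (rcons h s) b)); last first.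
  by rewrite -mulr_sumr sum_in_dist ?mulr1 //; exact: ht.
apply: ler_sum => b hb; rewrite -[X in _ <= X]mulr1. apply: ler_wpM2l.
  apply: mulr_ge0; first exact: (prod_ge0 _ _ a hsel).
  by case: (ht h s).
rewrite -[X in _ <= X](delta_sum _ _ _ ha hb); apply: ler_sum => t _; rewrite -[X in _ <= X]mulr1.
apply: ler_wpM2l; first exact: delta_ge0 _ _ _ _ ha hb.
by case/andP: (IH (rcons h s) t).
Qed.


Lemma agree_size sg tau1 tau2 k : (forall g, (k < size g)%N -> tau1 g = tau2 g) ->
  forall n h s, (k <= size h)%N -> rw sg tau1 n h s = rw sg tau2 n h s.
Proof.
move=> ht; elim=> [|n IH] h s hk //=.
case: ifP => // _; rewrite ht ?size_rcons ?ltnS //.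
apply: eq_bigr => a _; apply: eq_bigr => b _; congr (_ * _).
apply: eq_bigr => t _; rewrite IH // size_rcons; exact: leqW.
Qed.

Lemma shift_rw sg1 sg2 tau1 tau2 h0 :
  (forall p g s, sg1 p (h0 ++ rcons g s) = sg2 p (rcons g s)) ->
  (forall g s, tau1 (h0 ++ rcons g s) = tau2 (rcons g s)) ->
  forall n h s, rw sg1 tau1 n (h0 ++ h) s = rw sg2 tau2 n h s.
Proof.
move=> hs ht; elim=> [|n IH] h s //=.
case: ifP => // _; rewrite rcons_cat ht.
apply: eq_bigr => a _; apply: eq_bigr => b _; congr (_ * _ * _).
  by apply: eq_bigr => p _; rewrite hs.
by apply: eq_bigr => t _; rewrite -IH.
Qed.

Lemma winh_win sg h0 s : valid_team Av sg -> Winh sg h0 s -> W s.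
Proof.
move=> hs hw.
exists (fun p g => sg p (h0 ++ g)); split.
  by move=> p h s' /=; rewrite -rcons_cat; exact: hs.
move=> tau' ht' eps heps.
pose tau := fun g : seq S => if (size h0 < size g)%N && (take (size h0) g == h0)
   then tau' (drop (size h0) g) else tau' g.
have vt : valid_opp AvO tau.
  move=> h s'; rewrite /tau; case: ifP => [/andP [hsz _]|_]; last exact: ht'.
  rewrite size_rcons ltnS in hsz.
  rewrite -cats1 drop_cat; case: ltnP => hlt.
    by rewrite cats1; exact: ht'.
  have -> : size h0 = size h by apply/eqP; rewrite eqn_leq hsz hlt.
  by rewrite subnn drop0; exact: (ht' [::]).
have [n hn] := hw tau vt eps heps.
exists n; rewrite -(@shift_rw sg _ tau _ h0) ?cats0 //.
move=> g s'; rewrite /tau size_cat size_rcons addnS ltnS leq_addr take_size_cat //.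
by rewrite eqxx /= drop_size_cat.
Qed.

Lemma notwin sg h0 s : valid_team Av sg -> ~ W s -> ~ Winh sg h0 s.
Proof. by move=> hs hW hw; apply: hW; exact: winh_win hw. Qed.

Lemma succ_winh sg h s b a0 t : valid_team Av sg -> Winh sg h s -> s \notin T ->
  b \in AvO s -> avail_prof Av s a0 ->
  0 < \prod_p sg p (rcons h s) (a0 p) * delta s a0 b t -> Winh sg (rcons h s) t.
Proof.
move=> hs hw hsT hb ha0 hc tau' ht' eps heps.
apply: contrapT => hno.
have hlt : forall n, rw sg tau' n (rcons h s) t < 1 - eps.
  move=> n; rewrite ltNge; apply/negP => hle; apply: hno; by exists n.
have hsel : coll_selector Av s (fun p => sg p (rcons h s)) by move=> p; exact: hs.
pose tau := fun g => if g == rcons h s then (fun b' : AO => (b' == b)%:R) else tau' g.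
have vt : valid_opp AvO tau.
  move=> h' s'; rewrite /tau; case: eqP => [/rcons_inj [_ ->]|_]; last exact: ht'.
  split.
  - by move=> x; exact: ler0n.
  - by move=> x hx; case: eqP => // exb; rewrite exb hb in hx.
  - by rewrite (bigD1 b) //= eqxx big1 ?addr0 // => x /negbTE ->.
have key : forall n, rw sg tau n.+1 h s <= 1 - \prod_p sg p (rcons h s) (a0 p) * delta s a0 b t * eps.
  move=> n /=; rewrite (negbTE hsT).
  have e1 : forall a, avail_prof Av s a -> \sum_(b' in AvO s) \prod_p sg p (rcons h s) (a p) * tau (rcons h s) b' * \sum_t' delta s a b' t' * rw sg tau n (rcons h s) t' = \prod_p sg p (rcons h s) (a p) * \sum_t' delta s a b t' * rw sg tau' n (rcons h s) t'.
    move=> a ha; rewrite (bigD1 b) //= [X in _ + X]big1 => [|b' /andP [_ nb]]; last first.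
      by rewrite /tau eqxx (negbTE nb) /= mulr0 mul0r.
    rewrite addr0 {1}/tau eqxx eqxx mulr1; congr (_ * _); apply: eq_bigr => t' _; congr (_ * _).
    apply: (@agree_size sg tau tau' (size (rcons h s))) => // g hg.
    by rewrite /tau; case: eqP => // eg; rewrite eg ltnn in hg.
  rewrite (eq_bigr _ e1).
  have hr : forall t', 0 <= rw sg tau' n (rcons h s) t' <= 1 by move=> t'; exact: rw_bounds.
  have hY : forall a, avail_prof Av s a -> \prod_p sg p (rcons h s) (a p) * \sum_t' delta s a b t' * rw sg tau' n (rcons h s) t' <= \prod_p sg p (rcons h s) (a p).
    move=> a ha; rewrite -[X in _ <= X]mulr1; apply: ler_wpM2l; first exact: (prod_ge0 _ _ a hsel).
    rewrite -[X in _ <= X](delta_sum _ _ _ ha hb); apply: ler_sum => t' _.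
    rewrite -[X in _ <= X]mulr1; apply: ler_wpM2l; first exact: delta_ge0 _ _ _ _ ha hb.
    by case/andP: (hr t').
  have hY0 : \prod_p sg p (rcons h s) (a0 p) * \sum_t' delta s a0 b t' * rw sg tau' n (rcons h s) t' <= \prod_p sg p (rcons h s) (a0 p) - \prod_p sg p (rcons h s) (a0 p) * delta s a0 b t * eps.
    have hd : \sum_t' delta s a0 b t' * rw sg tau' n (rcons h s) t' <= 1 - delta s a0 b t * eps.
      rewrite (bigD1 t) //= -(delta_sum _ _ _ ha0 hb) [X in _ <= X - _](bigD1 t) //=.
      have h1 : delta s a0 b t * rw sg tau' n (rcons h s) t <= delta s a0 b t * (1 - eps).
        by apply: ler_wpM2l; [exact: delta_ge0 _ _ _ _ ha0 hb | exact: ltW].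
      have h2 : \sum_(t' | t' != t) delta s a0 b t' * rw sg tau' n (rcons h s) t' <= \sum_(t' | t' != t) delta s a0 b t'.
        apply: ler_sum => t' _; rewrite -[X in _ <= X]mulr1; apply: ler_wpM2l; first exact: delta_ge0 _ _ _ _ ha0 hb.
        by case/andP: (hr t').
      rewrite mulrBr mulr1 in h1; lra.
    rewrite -mulrA; apply: le_trans (ler_wpM2l (prod_ge0 _ _ a0 hsel) hd) _.
    by rewrite mulrBr mulr1 !mulrA.
  rewrite (bigD1 a0) //= -[X in _ <= X - _](sel_sum _ _ hsel) [X in _ <= X - _](bigD1 a0) //=.
  have h3 : \sum_(a | avail_prof Av s a && (a != a0)) \prod_p sg p (rcons h s) (a p) * \sum_t' delta s a b t' * rw sg tau' n (rcons h s) t' <= \sum_(a | avail_prof Av s a && (a != a0)) \prod_p sg p (rcons h s) (a p).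
    by apply: ler_sum => a /andP [ha _]; exact: hY.
  lra.
have ceps1 : \prod_p sg p (rcons h s) (a0 p) * delta s a0 b t * eps <= 1.
  have := key 0%N; case/andP: (@rw_bounds sg tau hs vt 1%N h s) => h0 _; lra.
have hall : forall n, rw sg tau n h s <= 1 - \prod_p sg p (rcons h s) (a0 p) * delta s a0 b t * eps.
  case=> [|n]; last exact: key.
  rewrite /= (negbTE hsT); lra.
have hce : 0 < \prod_p sg p (rcons h s) (a0 p) * delta s a0 b t * eps by apply: mulr_gt0.
have hce2 : 0 < \prod_p sg p (rcons h s) (a0 p) * delta s a0 b t * eps / 2 by apply: divr_gt0.
have [n hn] := hw tau vt _ hce2.
have := hall n; lra.
Qed.

Lemma dirac_dist (D : finType) (X : {set D}) z : z \in X ->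
  is_dist X (fun x => (x == z)%:R : R).
Proof.
move=> hz; split.
- by move=> x; exact: ler0n.
- by move=> x hx; case: eqP => // exb; rewrite exb hz in hx.
- by rewrite (bigD1 z) //= eqxx big1 ?addr0 // => x /negbTE ->.
Qed.

Lemma T_win s : s \in T -> W s.
Proof.
move=> hsT.
pose sg0 := fun p (g : seq S) (x : A p) => match g with [::] => 0
  | y :: g' => if [pick z in Av p (last y g')] is Some z then (x == z)%:R else 0 end : R.
exists sg0; split.
  move=> p h s'; rewrite /sg0; case E: (rcons h s') => [|y g'].
    by move: (size_rcons h s'); rewrite E.
  have -> : last y g' = s' by have := last_rcons y h s'; rewrite E /=.
  case: pickP => [z hz|hn]; first exact: dirac_dist.
  by move: (hAv p s') => /set0Pn [x hx]; rewrite hn in hx.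
move=> tau ht eps heps; exists 0%N => /=; rewrite hsT; lra.
Qed.

Lemma T_Wk k s : s \in T -> WK k s.
Proof. by elim: k => [|k IH] //= hs; left; exact: IH. Qed.

Lemma Wk_W k s : WK k s -> W s.
Proof.
elim: k s => [|k IH] s /=; first exact: T_win.
by case=> [/IH|[]].
Qed.

Lemma next_in_W sg h s b a t : valid_team Av sg -> Winh sg h s -> s \notin T ->
  b \in AvO s -> avail_prof Av s a ->
  0 < \prod_p sg p (rcons h s) (a p) * delta s a b t -> W t.
Proof.
move=> hs hw hsT hb ha hpos.
apply: (@winh_win sg (rcons h s) t hs).
exact: (@succ_winh sg h s b a t hs hw hsT hb ha hpos).
Qed.

Lemma spoil m (hst : forall s, WK m.+1 s -> WK m s) sg h s :
  valid_team Av sg -> Winh sg h s -> W s -> ~ WK m s ->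
  exists b, b \in AvO s /\ forall a t, avail_prof Av s a ->
    0 < \prod_p sg p (rcons h s) (a p) * delta s a b t -> W t /\ ~ WK m t.
Proof.
move=> hs hw hW hnm.
have hsT : s \notin T by apply/negP => hT'; apply: hnm; exact: T_Wk.
have hsel : coll_selector Av s (fun p => sg p (rcons h s)) by move=> p; exact: hs.
have massW : forall b, b \in AvO s -> mass Av delta W (fun p => sg p (rcons h s)) s b = 1.
  move=> b hb.
  have tot : \sum_t \sum_(a | avail_prof Av s a) \prod_p sg p (rcons h s) (a p) * delta s a b t = 1.
    rewrite exchange_big /= -[X in _ = X](sel_sum _ _ hsel); apply: eq_bigr => a ha.
    by rewrite -mulr_sumr delta_sum ?mulr1.
  rewrite /mass big_mkcond /= -[X in _ = X]tot; apply: eq_bigr => t _.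
  case: asboolP => // ntW; symmetry; apply: big1 => a ha.
  apply/eqP; rewrite eq_le; apply/andP; split; last first.
    by apply: mulr_ge0; [exact: (prod_ge0 _ _ a hsel) | exact: delta_ge0 _ _ _ _ ha hb].
  rewrite leNgt; apply/negP => hpos; apply: ntW; exact: (next_in_W _ _ _ _ _ _ hs hw hsT hb ha hpos).
apply: contrapT => hno.
apply: hnm; apply: hst; right; split => //.
exists (fun p => sg p (rcons h s)); split => // b hb.
split; last exact: massW.
rewrite ltNge; apply/negP => hle; apply: hno; exists b; split => // a t ha hpos.
split; first exact: (next_in_W _ _ _ _ _ _ hs hw hsT hb ha hpos).
move=> hmt.
have : 0 < mass Av delta (WK m) (fun p => sg p (rcons h s)) s b.
  apply: (lt_le_trans hpos); rewrite /mass.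
  apply: (le_trans (@sum_ge_term R _ (fun a => avail_prof Av s a)
     (fun a => \prod_p sg p (rcons h s) (a p) * delta s a b t) a _ ha)).
    move=> j hj; apply: mulr_ge0; [exact: (prod_ge0 _ _ j hsel) | exact: delta_ge0 _ _ _ _ hj hb].
  apply: (@sum_ge_term R S (fun t => `[< WK m t >])
     (fun t => \sum_(a | avail_prof Av s a) \prod_p sg p (rcons h s) (a p) * delta s a b t) t).
    move=> j _; apply: sumr_ge0 => a' ha'; apply: mulr_ge0;
      [exact: (prod_ge0 _ _ a' hsel) | exact: delta_ge0 _ _ _ _ ha' hb].
  by apply/asboolP.
by rewrite ltNge hle.
Qed.

Lemma main_notwin m (hst : forall s, WK m.+1 s -> WK m s) s : W s -> WK m s.
Proof.
move=> hW; apply: contrapT => hnm.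
case: (hW) => sg [hs hwin].
pose Sp h s b := b \in AvO s /\ forall a t, avail_prof Av s a ->
    0 < \prod_p sg p (rcons h s) (a p) * delta s a b t -> W t /\ ~ WK m t.
pose tsel h s : option AO := if [pick b | `[< Sp h s b >]] is Some b then Some b else [pick b in AvO s].
pose dir (o : option AO) (b' : AO) : R := if o is Some b then (b' == b)%:R else 0.
pose tau := fun g : seq S => match g with [::] => fun _ => 0
   | x :: g' => dir (tsel (belast x g') (last x g')) end.
have tau_rcons : forall h s, tau (rcons h s) = dir (tsel h s).
  move=> h s'; rewrite /tau; case E: (rcons h s') => [|x g'].
    by move: (size_rcons h s'); rewrite E.
  by move: E; rewrite lastI => /rcons_inj [-> ->].
have vt : valid_opp AvO tau.
  move=> h s'; rewrite tau_rcons /tsel.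
  case: pickP => [b /asboolP [hb _]|_]; first exact: dirac_dist.
  case: pickP => [b hb|hn]; first exact: dirac_dist.
  by move: (hAvO s') => /set0Pn [x hx]; rewrite hn in hx.
have inv : forall n h s, Winh sg h s -> W s -> ~ WK m s -> rw sg tau n h s = 0.
  elim=> [|n IH] h s' hw hW' hn' /=;
    have hsT : s' \in T = false by apply/negbTE/negP => hT'; apply: hn'; exact: T_Wk.
    by rewrite hsT.
  rewrite hsT.
  have [b [hb hsp]] := spoil _ hst _ _ _ hs hw hW' hn'.
  have [b0 [[hb0 hsp0] etsel]] : exists b0, Sp h s' b0 /\ tsel h s' = Some b0.
    rewrite /tsel; case: pickP => [b0 /asboolP hsp0|hn0]; first by exists b0.
    by have := hn0 b; rewrite (asboolT (conj hb hsp)).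
  rewrite tau_rcons etsel; apply: big1 => a ha; apply: big1 => b' hb'.
  rewrite /dir; case: eqP => [->|_]; last by rewrite mulr0 mul0r.
  rewrite mulr1 mulr_sumr; apply: big1 => t _.
  have hsel : coll_selector Av s' (fun p => sg p (rcons h s')) by move=> p; exact: hs.
  have := mulr_ge0 (prod_ge0 _ _ a hsel) (delta_ge0 _ _ _ t ha hb0).
  rewrite mulrA le_eqVlt => /orP [/eqP <-|hpos]; first by rewrite mul0r.
  have [hWt hnt] := hsp0 a t ha hpos.
  rewrite IH ?mulr0 //.
  exact: (@succ_winh sg h s' b0 a t hs hw (negbT hsT) hb0 ha hpos).
have hw0 : Winh sg [::] s by move=> tau0 ht0; exact: hwin tau0 ht0.
have h12 : (0:R) < 1/2 by lra.
have [n hn] := hw0 tau vt (1/2) h12.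
rewrite inv // in hn; lra.
Qed.

Lemma stab : exists m, forall s, WK m.+1 s -> WK m s.
Proof.
apply: contrapT => hno.
have hk : forall k, exists s, WK k.+1 s /\ ~ WK k s.
  move=> k; apply: contrapT => hk; apply: hno; exists k => s hs.
  by apply: contrapT => hn; apply: hk; exists s.
have hc : forall k, (k <= #|[set s | `[< WK k s >]]|)%N.
  elim=> [|k IH] //; apply: leq_ltn_trans IH _; apply: proper_card; apply/properP; split.
    by apply/subsetP => x; rewrite !inE => /asboolP hx; apply/asboolP; left.
  have [s [h1 h2]] := hk k; exists s; rewrite inE; first by apply/asboolP.
  by apply/negP => /asboolP.
have h1 := hc #|S|.+1; have h2 := max_card [set s | `[< WK #|S|.+1 s >]].
by have := leq_trans h1 h2; rewrite ltnn.
Qed.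

End Proofs.

Theorem lemma8 (R : realType) (S P : finType) (A : P -> finType) (AO : finType)
    (Av : forall p : P, S -> {set A p}) (AvO : S -> {set AO})
    (delta : S -> profile A -> AO -> S -> R) (T : {set S})
    (hAv : forall p s, Av p s != set0)
    (hAvO : forall s, AvO s != set0)
    (hdelta : forall s a b, avail_prof Av s a -> b \in AvO s ->
                is_dist [set: S] (delta s a b))
    (hT : forall s a b, s \in T -> avail_prof Av s a -> b \in AvO s ->
                \sum_(t in T) delta s a b t = 1) :
  exists m : nat, forall s : S, Wk Av AvO delta T m s <-> Win Av AvO delta T s.
Proof.
have [m hm] := @stab R S P A AO Av AvO delta T.
exists m => s; split.
  exact: (@Wk_W R S P A AO Av AvO delta T hAv m s).
exact: (@main_notwin R S P A AO Av AvO delta T hAvO hdelta m hm s).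
Qed.
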